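(* Let $\varphi$ be the automorphism of the free group $F=F(a,b)$ with $\varphi(a)=aba$, $\varphi(b)=a$, and let $A=\langle a,b,t\mid tat^{-1}=\varphi(a),\ tbt^{-1}=\varphi(b)\rangle$. Then the distortion function $\mathrm{Dist}^A_F$ (with respect to the generating sets $R=\{a,b\}$ of $F$ and $T=\{a,b,t\}$ of $A$) is equivalent to an exponential function and admits an exponentially bounded sequence of palindromic certificates in $F$.
   Context: $\mathrm{Dist}^A_F(n)=\max\{|g|_R: g\in F,\ |g|_T\le n\}$, extended to $[0,\infty)$ by linear interpolation. Equivalence of functions: $f\preceq g$ if there are $A',B,C>0$ with $f(x)\le g(A'x)+Bx$ for $x>C$; $f\sim g$ if both $f\preceq g$ and $g\preceq f$. An exponentially bounded sequence of certificates is a sequence $(g_m)$ in $F$ together with $C>1$ such that $|g_m|_R\to\infty$, $|g_{m+1}|_R\le C|g_m|_R$ for all $m$, and $\mathrm{Dist}^A_F(|g_m|_T/C)\le C|g_m|_R$ for all $m$; it is palindromic if each $g_m$ is represented by a reduced word in $R$ that reads the same left-to-right and right-to-left. *)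

(* Defs.v *)
From Stdlib Require Import Reals ZArith.
From mathcomp Require Import all_boot.

Set Implicit Arguments.
Unset Strict Implicit.
Unset Printing Implicit Defensive.

(* A letter (c, s): c = false is a, c = true is b; s = true means inverse. *)
Definition letter := (bool * bool)%type.
Definition la : letter := (false, false).
Definition lb : letter := (true, false).
Definition linv (x : letter) : letter := (x.1, ~~ x.2).

Definition reduce (w : seq letter) : seq letter :=
  foldr (fun x acc => if acc is y :: r then
                        (if y == linv x then r else x :: acc)
                      else [:: x]) [::] w.
Definition reduced (w : seq letter) : bool := reduce w == w.

Definition winv (w : seq letter) : seq letter := rev (map linv w).
Definition fmul (u v : seq letter) : seq letter := reduce (u ++ v).

Definition lenR (g : seq letter) : nat := size (reduce g).

(* the automorphism phi : a |-> aba, b |-> a, and its inverse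
   psi : a |-> b, b |-> b^-1 a b^-1 *)
Definition phi_gen (c : bool) : seq letter :=
  if c then [:: la] else [:: la; lb; la].
Definition psi_gen (c : bool) : seq letter :=
  if c then [:: linv lb; la; linv lb] else [:: lb].
Definition subst (f : bool -> seq letter) (w : seq letter) : seq letter :=
  reduce (flatten [seq (if x.2 then winv (f x.1) else f x.1) | x <- w]).
Definition phi := subst phi_gen.
Definition psi := subst psi_gen.
Definition phiZ (k : Z) (w : seq letter) : seq letter :=
  if (0 <=? k)%Z then ssrnat.iter (Z.to_nat k) phi (reduce w)
  else ssrnat.iter (Z.to_nat (- k)) psi (reduce w).

(* ---------- The group A = <a,b,t | t a t^-1 = phi a, t b t^-1 = phi b> ----
   modelled as the semidirect product F x|_phi Z: the element (u, k)
   stands for u t^k, with t w t^-1 = phi(w). *)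
(* letters of T = {a,b,t}: None = t, Some c = a or b; second component:
   inverse flag *)
Definition tletter := (option bool * bool)%type.

Definition astep (st : seq letter * Z) (x : tletter) : seq letter * Z :=
  let: (u, k) := st in
  match x with
  | (None, s) => (u, if s then (k - 1)%Z else (k + 1)%Z)
  | (Some c, s) => (fmul u (phiZ k [:: (c, s)]), k)
  end.

Definition evalA (w : seq tletter) : seq letter * Z := foldl astep ([::], 0%Z) w.

Definition talphabet : seq tletter :=
  [:: (None, false); (None, true); (Some false, false); (Some false, true);
      (Some true, false); (Some true, true)].

Definition words (n : nat) : seq (seq tletter) :=
  ssrnat.iter n (fun ws => [seq x :: w | x <- talphabet, w <- ws]) [:: [::]].

Definition represents (g : seq letter) (w : seq tletter) : bool :=
  ((evalA w).1 == reduce g) && Z.eqb (evalA w).2 0.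

(* |g|_T : word length in A w.r.t. T = {a,b,t}; the least n such that some
   word of length n represents g (at most |g|_R, so the search range
   suffices). *)
Definition lenT (g : seq letter) : nat :=
  find (fun n => has (represents g) (words n)) (iota 0 (lenR g).+1).

(* Dist^A_F(n) = max { |g|_R : g in F, |g|_T <= n }, on integers; the
   elements g in F with |g|_T <= n are exactly the values of words of length
   <= n over T with t-exponent sum 0. *)
Definition DistN (n : nat) : nat :=
  foldr maxn 0 [seq lenR (evalA w).1 |
                 w <- flatten [seq words k | k <- iota 0 n.+1] &
                 Z.eqb (evalA w).2 0].

(* extension to [0, oo) by linear interpolation *)
Definition Dist (x : R) : R :=
  let n := Z.to_nat (Int_part x) in
  Rplus (INR (DistN n)) (Rmult (Rminus x (INR n)) (Rminus (INR (DistN n.+1)) (INR (DistN n)))).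

Definition fle (f g : R -> R) : Prop :=
  exists A' B C : R, Rlt 0 A' /\ Rlt 0 B /\ Rlt 0 C /\
    forall x : R, Rlt C x -> Rle (f x) (Rplus (g (Rmult A' x)) (Rmult B x)).
Definition fequiv (f g : R -> R) : Prop := fle f g /\ fle g f.

Definition exp_bounded_certificates (gs : nat -> seq letter) : Prop :=
  (forall m, reduced (gs m)) /\
  exists C : R, Rlt 1 C /\
    (forall N : nat, exists M : nat, forall m : nat, (M <= m)%N -> (N <= lenR (gs m))%N) /\
    (forall m : nat, Rle (INR (lenR (gs m.+1))) (Rmult C (INR (lenR (gs m))))) /\
    (forall m : nat, Rle (Dist (Rdiv (INR (lenT (gs m))) C)) (Rmult C (INR (lenR (gs m))))).

Definition palindromic (gs : nat -> seq letter) : Prop :=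
  forall m, rev (reduce (gs m)) = reduce (gs m).

(* Main.v *)
Require Import Defs.
From Stdlib Require Import Reals.
From Stdlib Require Import ZArith Lia Lra.
From mathcomp Require Import all_boot.
From mathcomp Require Import zify.

Lemma reduce_cons x w : reduce (x :: w) =
  if reduce w is y :: r then (if y == linv x then r else x :: reduce w) else [:: x].
Proof. by []. Qed.

Lemma size_reduce w : size (reduce w) <= size w.
Proof.
elim: w => [|x w IH] //; rewrite reduce_cons.
case E: (reduce w) => [|y r] //=; rewrite E /= in IH.
case: ifP => _ /=; lia.
Qed.

Lemma size_fmul u v : size (fmul u v) <= size u + size v.
Proof. by rewrite /fmul; apply: leq_trans (size_reduce _) _; rewrite size_cat. Qed.

Lemma size_subst f w : (forall c, size (f c) <= 3) -> size (subst f w) <= 3 * size w.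
Proof.
move=> Hf; rewrite /subst; apply: leq_trans (size_reduce _) _.
elim: w => [|x w IH] //=; rewrite size_cat.
have: size (if x.2 then winv (f x.1) else f x.1) <= 3.
  by case: x.2; rewrite ?/winv ?size_rev ?size_map Hf.
lia.
Qed.

Lemma size_phi_gen c : size (phi_gen c) <= 3. Proof. by case: c. Qed.
Lemma size_psi_gen c : size (psi_gen c) <= 3. Proof. by case: c. Qed.

Lemma size_iter f j w : (forall c, size (f c) <= 3) ->
  size (ssrnat.iter j (subst f) w) <= 3 ^ j * size w.
Proof.
move=> Hf; elim: j => [|j IH] /=; first by rewrite mul1n.
apply: leq_trans (size_subst _ _ Hf) _; rewrite expnS -mulnA leq_mul2l; done.
Qed.

Lemma size_phiZ k x : size (phiZ k [:: x]) <= 3 ^ (Z.abs_nat k).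
Proof.
rewrite /phiZ; case: ifP => Hk.
- apply: leq_trans (size_iter _ _ _ size_phi_gen) _.
  have -> : size (reduce [:: x]) = 1 by [].
  rewrite muln1; have -> : Z.to_nat k = Z.abs_nat k by move/Z.leb_le: Hk; lia. done.
- apply: leq_trans (size_iter _ _ _ size_psi_gen) _.
  have -> : size (reduce [:: x]) = 1 by [].
  rewrite muln1; have -> : Z.to_nat (-k) = Z.abs_nat k.
    by move/Z.leb_nle: Hk; lia.
  done.
Qed.

Lemma evalA_bound w u k :
  size (foldl astep (u, k) w).1 <= size u + size w * 3 ^ (Z.abs_nat k + size w) /\
  (Z.abs_nat (foldl astep (u, k) w).2 <= Z.abs_nat k + size w)%N.
Proof.
elim: w u k => [|x w IH] u k /=; first by split; lia.
case: x => [[c|] s] /=.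
- have [H1 H2] := IH (fmul u (phiZ k [:: (c, s)])) k.
  split; last by lia.
  apply: leq_trans H1 _.
  have H3 := size_fmul u (phiZ k [:: (c, s)]).
  have H4 := size_phiZ k (c, s).
  have H5 : 3 ^ Z.abs_nat k <= 3 ^ (Z.abs_nat k + (size w).+1) by rewrite leq_exp2l // leq_addr.
  have H6 : 3 ^ (Z.abs_nat k + size w) <= 3 ^ (Z.abs_nat k + (size w).+1) by rewrite leq_exp2l // addnS.
  have H7 := leq_mul (leqnn (size w)) H6.
  move: H3 H4 H5 H7; rewrite mulSn.
  generalize (3 ^ (Z.abs_nat k + (size w).+1)) (3 ^ Z.abs_nat k) (3 ^ (Z.abs_nat k + size w))=> X Y Z; move: (size w * Z) (size w * X) => P Q h1 h2 h3 h4; rewrite addnA; apply: leq_add => //; apply: leq_trans h1 _; rewrite leq_add2l; apply: leq_trans h2 h3.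
- have Hk : (Z.abs_nat (if s then (k - 1)%Z else (k + 1)%Z) <= (Z.abs_nat k).+1)%N by case: s; lia.
  set k' := (if s then (k - 1)%Z else (k + 1)%Z) in Hk *.
  have [H1 H2] := IH u k'.
  split; last by lia.
  apply: leq_trans H1 _.
  have H6 : 3 ^ (Z.abs_nat k' + size w) <= 3 ^ (Z.abs_nat k + (size w).+1) by rewrite leq_exp2l //; lia.
  have H7 := leq_mul (leqnn (size w)) H6.
  move: H7; rewrite mulSn.
  generalize (3 ^ (Z.abs_nat k + (size w).+1)) (3 ^ (Z.abs_nat k' + size w)) => X Z.
  move: (size w * Z) (size w * X) => P Q; lia.
Qed.

Lemma evalA_size w : size (evalA w).1 <= size w * 3 ^ (size w).
Proof. by have [H _] := evalA_bound w [::] 0%Z. Qed.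


Lemma foldr_max_ge (s : seq nat) x : x \in s -> x <= foldr maxn 0 s.
Proof.
elim: s => [|y s IH] //=; rewrite in_cons => /orP [/eqP ->|H].
- by rewrite leq_maxl.
- by apply: leq_trans (IH H) _; rewrite leq_maxr.
Qed.

Lemma foldr_max_le (s : seq nat) B : (forall x, x \in s -> x <= B) -> foldr maxn 0 s <= B.
Proof.
elim: s => [|y s IH] //= H; rewrite geq_max H ?mem_head //= IH // => x Hx.
by apply: H; rewrite in_cons Hx orbT.
Qed.

Lemma words_size n w : w \in words n -> size w = n.
Proof.
elim: n w => [|n IH] w; first by rewrite inE => /eqP ->.
move=> H; have : w \in [seq x :: v | x <- talphabet, v <- words n] := H.
move/allpairsP => [[x v] [_ /= Hv ->]] /=.
by rewrite (IH v Hv).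
Qed.

Lemma words_mem w : w \in words (size w).
Proof.
elim: w => [|x w IH]; first by rewrite inE.
change (x :: w \in [seq x :: v | x <- talphabet, v <- words (size w)]).
apply: (allpairs_f (fun x w => x :: w)) => //.
by case: x => [[[]|] []].
Qed.

Lemma DistN_ge n w : size w <= n -> Z.eqb (evalA w).2 0 -> lenR (evalA w).1 <= DistN n.
Proof.
move=> Hs Hz; rewrite /DistN; apply: foldr_max_ge; apply: (map_f (fun w => lenR (evalA w).1)); rewrite mem_filter Hz andTb.
apply/flatten_mapP; exists (size w); first by rewrite mem_iota.
exact: words_mem.
Qed.

Lemma expleq a b e : a <= b -> a ^ e <= b ^ e.
Proof. by move=> H; elim: e => [|e IH] //; rewrite !expnS leq_mul. Qed.

Lemma DistN_le n : DistN n <= 8 ^ n.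
Proof.
apply: foldr_max_le => x /mapP [w]; rewrite mem_filter => /andP [_ /flatten_mapP [k]].
rewrite mem_iota => Hk /words_size Hw ->.
rewrite /lenR; apply: leq_trans (size_reduce _) _; apply: leq_trans (evalA_size _) _.
rewrite Hw; have Hkn : k <= n by lia.
have h1 : k <= 2 ^ k by apply: ltnW; apply: ltn_expl.
have h2 : 3 ^ k <= 4 ^ k by apply: expleq.
rewrite (_ : 8 = 2 * 4); last by [].
rewrite expnMn; apply: leq_trans (leq_mul h1 h2) _.
by apply: leq_mul; apply: leq_pexp2l.
Qed.

Lemma DistN_mono n m : n <= m -> DistN n <= DistN m.
Proof.
move=> H; apply: foldr_max_le => x /mapP [w]; rewrite mem_filter => /andP [Hz /flatten_mapP [k]].
rewrite mem_iota => Hk /words_size Hw ->.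
apply: DistN_ge Hz; rewrite Hw; apply: leq_trans _ H; move: Hk => /andP [_]; by rewrite add0n ltnS.
Qed.


Definition pos (w : seq letter) := all (fun x : letter => ~~ x.2) w.
Definition pphi (w : seq letter) := flatten [seq phi_gen x.1 | x <- w].

Lemma reduce_pos w : pos w -> reduce w = w.
Proof.
elim: w => [|x w IH] // /andP [Hx Hw]; rewrite reduce_cons (IH Hw).
case: w Hw {IH} => [|y r] //= /andP [Hy _].
case: ifP => // /eqP E; move: Hx Hy; rewrite E /linv /=; by case: (x.2).
Qed.

Lemma pos_pphi w : pos (pphi w).
Proof. by elim: w => [|x w IH] //=; rewrite /pos all_cat; case: (x.1). Qed.

Lemma phi_pos w : pos w -> phi w = pphi w.
Proof.
move=> Hw; rewrite /phi /subst.
have -> : [seq (if x.2 then winv (phi_gen x.1) else phi_gen x.1) | x <- w] =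
          [seq phi_gen x.1 | x <- w].
  apply/eq_in_map => x Hx; move/allP: Hw => /(_ x Hx); by case: (x.2).
exact: reduce_pos (pos_pphi w).
Qed.

Definition na (w : seq letter) := count (fun x : letter => ~~ x.1) w.
Definition nb (w : seq letter) := count (fun x : letter => x.1) w.

Lemma size_nab w : size w = na w + nb w.
Proof. by rewrite addnC -(count_predC (fun x : letter => x.1)). Qed.

Lemma na_cat u v : na (u ++ v) = na u + na v. Proof. exact: count_cat. Qed.
Lemma nb_cat u v : nb (u ++ v) = nb u + nb v. Proof. exact: count_cat. Qed.
Lemma na_cons x w : na (x :: w) = ~~ x.1 + na w. Proof. by []. Qed.
Lemma nb_cons x w : nb (x :: w) = x.1 + nb w. Proof. by []. Qed.
Lemma pphi_cons x w : pphi (x :: w) = phi_gen x.1 ++ pphi w. Proof. by []. Qed.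

Lemma na_pphi w : na (pphi w) = 2 * na w + nb w.
Proof.
elim: w => [|[[] s] w IH] //; rewrite pphi_cons na_cat IH na_cons nb_cons /=; lia.
Qed.

Lemma nb_pphi w : nb (pphi w) = na w.
Proof.
elim: w => [|[[] s] w IH] //; rewrite pphi_cons nb_cat IH na_cons /=; lia.
Qed.

Lemma rev_pphi w : rev (pphi w) = pphi (rev w).
Proof.
elim: w => [|x w IH] //=; rewrite rev_cat IH rev_cons /pphi map_rcons flatten_rcons.
by case: (x.1).
Qed.

Definition g m := ssrnat.iter m phi [:: la].


Lemma g_pos m : pos (g m).
Proof.
elim: m => [|m IH] //; change (pos (phi (g m))); rewrite phi_pos //; exact: pos_pphi.
Qed.

Lemma g_S m : g m.+1 = pphi (g m).
Proof. by change (phi (g m) = pphi (g m)); rewrite phi_pos // g_pos. Qed.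

Lemma g_inv m : nb (g m) <= na (g m).
Proof. elim: m => [|m IH] //; rewrite g_S na_pphi nb_pphi; lia. Qed.

Lemma g_size_lo m : 2 ^ m <= size (g m).
Proof.
elim: m => [|m IH] //; rewrite g_S expnS size_nab na_pphi nb_pphi.
have := g_inv m; move: IH; rewrite size_nab; lia.
Qed.

Lemma g_size_hi m : size (g m.+1) <= 3 * size (g m).
Proof. rewrite g_S !size_nab na_pphi nb_pphi; have := g_inv m; lia. Qed.

Lemma g_rev m : rev (g m) = g m.
Proof. elim: m => [|m IH] //; by rewrite g_S rev_pphi IH. Qed.

Lemma reduce_g m : reduce (g m) = g m.
Proof. exact: reduce_pos (g_pos m). Qed.

Lemma foldl_t u k j s : foldl astep (u, k) (nseq j (None, s)) =
  (u, if s then (k - Z.of_nat j)%Z else (k + Z.of_nat j)%Z).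
Proof.
elim: j k => [|j IH] k /=; first by case: s; rewrite ?Z.sub_0_r ?Z.add_0_r.
rewrite IH {IH}; case: s; congr pair; lia.
Qed.

Definition tw m : seq tletter := nseq m (None, false) ++ (Some false, false) :: nseq m (None, true).

Lemma size_tw m : size (tw m) = (2 * m).+1.
Proof. rewrite /tw size_cat /= !size_nseq; lia. Qed.

Lemma evalA_tw m : evalA (tw m) = (g m, 0%Z).
Proof.
rewrite /evalA /tw foldl_cat foldl_t /= foldl_t.
have -> : (0 + Z.of_nat m - Z.of_nat m = 0)%Z by lia.
congr pair; rewrite /fmul /= /phiZ.
have -> : (0 <=? 0 + Z.of_nat m)%Z = true by apply/Z.leb_le; lia.
have -> : Z.to_nat (0 + Z.of_nat m) = m by lia.
exact: reduce_g.
Qed.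


Lemma lenT_g m : lenT (g m) <= (2 * m).+1.
Proof.
rewrite /lenT; set s := iota 0 (lenR (g m)).+1.
case: (ltnP (2 * m).+1 (size s)) => H.
- rewrite leqNgt; apply/negP => Hlt.
  have := before_find 0 Hlt; rewrite nth_iota; last by rewrite size_iota in H.
  rewrite add0n => /negP; apply; apply/hasP; exists (tw m).
  + by rewrite -(size_tw m) words_mem.
  + by rewrite /represents evalA_tw reduce_g eqxx.
- exact: leq_trans (find_size _ _) H.
Qed.

Lemma lenR_g m : lenR (g m) = size (g m).
Proof. by rewrite /lenR reduce_g. Qed.

Lemma DistN_g m : size (g m) <= DistN (2 * m).+1.
Proof.
have := @DistN_ge (2 * m).+1 (tw m); rewrite size_tw evalA_tw /= lenR_g; apply => //.
Qed.


Open Scope R_scope.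

Lemma floor_spec y : 0 <= y ->
  INR (Z.to_nat (Int_part y)) <= y < INR (Z.to_nat (Int_part y)) + 1.
Proof.
move=> Hy; have [H1 H2] := base_Int_part y.
have H3 : (0 <= Int_part y)%Z.
  have : (-1 < Int_part y)%Z by apply: lt_IZR; lra.
  lia.
rewrite INR_IZR_INZ Z2Nat.id //; lra.
Qed.

Lemma Dist_between y : 0 <= y ->
  INR (DistN (Z.to_nat (Int_part y))) <= Dist y <= INR (DistN (Z.to_nat (Int_part y)).+1).
Proof.
move=> Hy; have := floor_spec y Hy; unfold Dist; cbv zeta.
set n := Z.to_nat (Int_part y) => Hn.
have Hab : INR (DistN n) <= INR (DistN n.+1) by apply: le_INR; apply/leP; apply: DistN_mono.
set a := INR (DistN n) in Hab *; set b := INR (DistN n.+1) in Hab *.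
split; nra.
Qed.

Lemma exp_INR k : exp (INR k) = exp 1 ^ k.
Proof.
elim: k => [|k IH]; first by rewrite /= exp_0.
by rewrite S_INR exp_plus IH /=; ring.
Qed.

Lemma exp_mono a b : a <= b -> exp a <= exp b.
Proof.
move=> H; case: (Rle_lt_or_eq_dec _ _ H) => H'.
- by apply: Rlt_le; apply: exp_increasing.
- by rewrite H'; apply: Rle_refl.
Qed.

Lemma exp1_gt2 : 2 < exp 1.
Proof. have := exp_ineq1 1; lra. Qed.


Lemma INR_muln a b : INR (a * b)%N = INR a * INR b.
Proof. by rewrite mulnE mult_INR. Qed.

Lemma INR_expn a k : INR (a ^ k)%N = INR a ^ k.
Proof. elim: k => [|k IH] //; by rewrite expnS INR_muln IH. Qed.

Lemma INR_8pow k : INR (8 ^ k) <= exp 1 ^ (3 * k).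
Proof.
rewrite INR_expn mulnE pow_mult.
apply: pow_incr; split; first by simpl; lra.
have := exp1_gt2; simpl => H.
have : 2 * 2 <= exp 1 * exp 1 by nra.
nra.
Qed.

Lemma upper : fle Dist (fun x => exp x).
Proof.
exists 6, 1, 1; split; [lra|split; [lra|split; [lra|]]].
move=> x Hx.
have Hx0 : 0 <= x by lra.
have [_ H1] := Dist_between x Hx0.
have [H2 _] := floor_spec x Hx0.
set n := Z.to_nat (Int_part x) in H1 H2.
apply: Rle_trans H1 _.
have H3 : INR (DistN n.+1) <= INR (8 ^ n.+1) by apply: le_INR; apply/leP; apply: DistN_le.
have H4 := INR_8pow n.+1.
rewrite -exp_INR in H4.
have H5 : INR (3 * n.+1) <= 6 * x.
  rewrite INR_muln (S_INR n) (_ : INR 3 = 3); [lra | simpl; ring].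
have H6 := exp_mono _ _ H5.
lra.
Qed.

Lemma lower : fle (fun x => exp x) Dist.
Proof.
exists 10, 1, 1; split; [lra|split; [lra|split; [lra|]]].
move=> x Hx.
have Hx0 : 0 <= x by lra.
have [H2 H2'] := floor_spec x Hx0.
set n' := Z.to_nat (Int_part x) in H2 H2'.
have Hy0 : 0 <= 10 * x by lra.
have [H1 _] := Dist_between (10 * x) Hy0.
have [H3 H3'] := floor_spec (10 * x) Hy0.
set n := Z.to_nat (Int_part (10 * x)) in H1 H3 H3'.
have Hn : ((2 * (2 * n'.+1)).+1 <= n)%N.
  have : INR (4 * n' + 4) < INR n.
    rewrite plus_INR INR_muln (_ : INR 4 = 4); last by simpl; ring.
    lra.
  move/INR_lt => /leP; lia.
have H4 : INR (size (g (2 * n'.+1))) <= INR (DistN n).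
  apply: le_INR; apply/leP; apply: leq_trans (DistN_g _) _; exact: DistN_mono.
have H5 : INR (2 ^ (2 * n'.+1)) <= INR (size (g (2 * n'.+1))).
  by apply: le_INR; apply/leP; apply: g_size_lo.
have H6 : exp x <= exp 1 ^ n'.+1.
  by rewrite -exp_INR; apply: exp_mono; rewrite S_INR; lra.
have H7 : exp 1 ^ n'.+1 <= INR (2 ^ (2 * n'.+1)).
  rewrite INR_expn mulnE pow_mult; apply: pow_incr.
  have := exp_le_3; have := exp1_gt2; simpl; lra.
lra.
Qed.

Lemma cert_dist m : Dist (INR (lenT (g m)) / 64) <= 64 * INR (lenR (g m)).
Proof.
have Hy0 : 0 <= INR (lenT (g m)) / 64.
  have := pos_INR (lenT (g m)); lra.
have [_ H1] := Dist_between _ Hy0.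
have [H2 _] := floor_spec _ Hy0.
set n := Z.to_nat (Int_part (INR (lenT (g m)) / 64)) in H1 H2.
apply: Rle_trans H1 _.
have HT : INR (lenT (g m)) <= INR (2 * m).+1 by apply: le_INR; apply/leP; apply: lenT_g.
have Hn : (64 * n <= (2 * m).+1)%N.
  apply/leP; apply: INR_le; rewrite INR_muln (_ : INR 64 = 64); last by simpl; ring.
  lra.
have Hnat : (DistN n.+1 <= 64 * lenR (g m))%N.
  apply: leq_trans (DistN_le _) _; rewrite lenR_g.
  apply: leq_trans _ (leq_mul (leqnn 64) (g_size_lo m)).
  rewrite (_ : 8 = 2 ^ 3)%N // -expnM (_ : 64 = 2 ^ 6)%N // -expnD.
  apply: leq_pexp2l => //; lia.
have := le_INR _ _ (elimT leP Hnat); rewrite INR_muln (_ : INR 64 = 64) //; simpl; ring.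
Qed.

Lemma main_aux :
  fequiv Dist (fun x => exp x) /\
  exists gs : nat -> seq letter,
    exp_bounded_certificates gs /\ palindromic gs.
Proof.
split; first by split; [exact: upper | exact: lower].
exists g; split.
- split; first by move=> m; rewrite /reduced reduce_g.
  exists 64; split; first lra.
  split.
  + move=> N; exists N => m Hm; rewrite lenR_g.
    apply: leq_trans Hm _; apply: leq_trans (ltnW (ltn_expl m (isT : (1 < 2)%N))) _.
    exact: g_size_lo.
  split.
  + move=> m; rewrite !lenR_g -(_ : INR 64 = 64); last by simpl; ring.
    rewrite -INR_muln; apply: le_INR; apply/leP.
    apply: leq_trans (g_size_hi m) _; by rewrite leq_mul2r; apply/orP; right.
  + exact: cert_dist.
- by move=> m; rewrite reduce_g g_rev.
Qed.


Close Scope R_scope.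

Theorem lemma5p5 :
  fequiv Dist (fun x => exp x) /\
  exists gs : nat -> seq letter,
    exp_bounded_certificates gs /\ palindromic gs.
Proof. exact: main_aux. Qed.
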